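(* Let $(R,\mathfrak{m})$ be a Noetherian local ring and let $J\subseteq I$ be two ideals of $R$. Let $x_1,\ldots,x_s$ be a minimal generating set of $J$. Write $J_0=0$ and $J_i=(x_1,\ldots,x_i)$ for $i=1,\ldots,s$. Let $n\geq 2$. Then the following are equivalent: (i) $H_1(x_1t,\ldots,x_it;\mathbf{R}(I))_n=0$ for all $i=1,\ldots,s$; (ii) $\big((J_{i-1}I^{n-1}:x_i)\cap I^{n-1}\big)/J_{i-1}I^{n-2}=0$ for all $i=1,\ldots,s$. Suppose in addition that $x_1,\ldots,x_s$ is an $R$-sequence and that $x_1^*,\ldots,x_{s-1}^*$ is a $\mathbf{G}(I)$-sequence. Then $H_1(x_1t,\ldots,x_it;\mathbf{R}(I))_n=0$ for all $n\geq 2$ and all $i=1,\ldots,s$.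
   Context: $\mathbf{R}(I)=\bigoplus_{n\geq0}I^nt^n$ is the Rees algebra, $\mathbf{G}(I)=\bigoplus_{n\geq0}I^n/I^{n+1}$ the associated graded ring, and $x_i^*$ the class of $x_i$ in $I/I^2$; $I^0=R$. For degree-one elements $z_1,\ldots,z_m$ of $U=\mathbf{R}(I)$, $H_1(z_1,\ldots,z_m;U)_n$ is the first homology of the degree-$n$ strand of the Koszul complex $\wedge_2(R^m)\otimes U_{n-2}\to\wedge_1(R^m)\otimes U_{n-1}\to U_n$, with differentials $e_i\wedge e_j\otimes u\mapsto e_j\otimes z_iu-e_i\otimes z_ju$ and $e_i\otimes v\mapsto z_iv$. *)

(* Defs.v *)
From HB Require Import structures.
From mathcomp Require Import all_boot all_order all_algebra.
Set Implicit Arguments. Unset Strict Implicit. Unset Printing Implicit Defensive.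
Import Order.TTheory GRing.Theory.
Local Open Scope ring_scope.

Section Defs.
Variable R : comUnitRingType.

Definition is_ideal (S : R -> Prop) : Prop :=
  [/\ S 0, (forall a b, S a -> S b -> S (a + b)) & (forall c a, S a -> S (c * a))].

Definition gen (s : seq R) : R -> Prop :=
  fun r => exists c : 'I_(size s) -> R, r = \sum_(i < size s) c i * s`_i.

Definition iadd (I J : R -> Prop) : R -> Prop :=
  fun r => exists a b, [/\ I a, J b & r = a + b].

Definition imul (I J : R -> Prop) : R -> Prop :=
  fun r => exists (k : nat) (a b : nat -> R),
    (forall i, (i < k)%N -> I (a i) /\ J (b i)) /\ r = \sum_(i < k) a i * b i.

Definition ipow (I : R -> Prop) (n : nat) : R -> Prop :=
  iter n (imul I) (fun _ => True).

Definition noetherian : Prop :=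
  forall S : R -> Prop, is_ideal S -> exists s : seq R, forall r, S r <-> gen s r.

(* local: the non-units form an ideal (R is nonzero as a unit ring) *)
Definition local_ring : Prop :=
  forall a b : R, a \isn't a GRing.unit -> b \isn't a GRing.unit ->
    (a + b) \isn't a GRing.unit.

Definition minimal_generating (J : R -> Prop) (x : seq R) : Prop :=
  (forall r, J r <-> gen x r) /\
  (forall y : seq R, (forall r, J r <-> gen y r) -> (size x <= size y)%N).

(* H_1(z_1 t, ..., z_m t; R(I))_n = 0, for n >= 2.  The degree-k strand of
   the Rees algebra R(I) = ⊕ I^k t^k is U_k = I^k t^k ≅ I^k, so the strand
   ∧2(R^m)⊗U_{n-2} -> R^m⊗U_{n-1} -> U_n is
   e_j∧e_k ⊗ u |-> e_k ⊗ z_j u - e_j ⊗ z_k u  (j < k),  e_j ⊗ v |-> z_j v.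
   Vanishing of H_1 = exactness at the middle term. *)
Definition H1_zero (I : R -> Prop) (z : seq R) (n : nat) : Prop :=
  forall v : 'I_(size z) -> R,
    (forall j, ipow I n.-1 (v j)) ->
    \sum_(j < size z) z`_j * v j = 0 ->
    exists u : 'I_(size z) -> 'I_(size z) -> R,
      (forall j k, ipow I (n - 2) (u j k)) /\
      (forall l : 'I_(size z),
         v l = \sum_(j < size z | (j < l)%N) z`_j * u j l
             - \sum_(k < size z | (l < k)%N) z`_k * u l k).

(* condition (ii) for index i (1-based):
   ((J_{i-1} I^{n-1} : x_i) ∩ I^{n-1}) / J_{i-1} I^{n-2} = 0,
   i.e. ((J_{i-1} I^{n-1} : x_i) ∩ I^{n-1}) ⊆ J_{i-1} I^{n-2}
   (the reverse inclusion always holds, so the quotient makes sense). *)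
Definition colon_zero (I : R -> Prop) (x : seq R) (i n : nat) : Prop :=
  forall r, ipow I n.-1 r ->
    imul (gen (take i.-1 x)) (ipow I n.-1) (x`_(i.-1) * r) ->
    imul (gen (take i.-1 x)) (ipow I (n - 2)) r.

Definition R_sequence (x : seq R) : Prop :=
  (forall i, (i < size x)%N ->
     forall r, gen (take i x) (x`_i * r) -> gen (take i x) r) /\
  ~ gen x 1.

(* degree-d part of the ideal (y_1^#, ..., y_k^#) G(I), pulled back to I^d:
   (y) I^{d-1}, and 0 in degree 0 *)
Definition low_part (I : R -> Prop) (y : seq R) (d : nat) : R -> Prop :=
  if d is d'.+1 then imul (gen y) (ipow I d') else (fun r => r = 0).

(* y_1^#, ..., y_k^# (classes of y_i in I/I^2) is a G(I)-sequence, where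
   G(I) = ⊕ I^d/I^{d+1}.  Written degreewise: the d-th graded component of
   G(I)/(y_1^#..y_{i-1}^#)G(I) is I^d / (I^{d+1} + (y_{<i}) I^{d-1}), and
   y_i^# maps degree d to degree d+1 by multiplication by y_i. *)
Definition G_sequence (I : R -> Prop) (y : seq R) : Prop :=
  (forall i, (i < size y)%N -> forall d a, ipow I d a ->
     iadd (ipow I d.+2) (low_part I (take i y) d.+1) (y`_i * a) ->
     iadd (ipow I d.+1) (low_part I (take i y) d) a) /\
  (exists d a, ipow I d a /\ ~ iadd (ipow I d.+1) (low_part I y d) a).

End Defs.

(* Main.v *)
Require Import Defs.
From HB Require Import structures.
From mathcomp Require Import all_boot all_order all_algebra.
From mathcomp Require Import zify ring.
Import GRing.Theory.
Local Open Scope ring_scope.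
Set Implicit Arguments. Unset Strict Implicit. Unset Printing Implicit Defensive.
Section Aux.
Variable R : comUnitRingType.

Definition comb (P : R -> Prop) (s : seq R) (k : nat) (r : R) :=
  exists c : nat -> R, (forall j, (j < k)%N -> P (c j)) /\ r = \sum_(j < k) s`_j * c j.

Lemma imul_ideal (A B : R -> Prop) : (forall c a, A a -> A (c * a)) -> is_ideal (imul A B).
Proof.
move=> hA; split.
- exists 0%N, (fun _ => 0), (fun _ => 0); split => //; by rewrite big_ord0.
- move=> a b [k1 [a1 [b1 [h1 ->]]]] [k2 [a2 [b2 [h2 ->]]]].
  exists (k1 + k2)%N, (fun i => if (i < k1)%N then a1 i else a2 (i - k1)%N),
     (fun i => if (i < k1)%N then b1 i else b2 (i - k1)%N); split.
  + move=> i hi; case: ifP => hik; first exact: h1.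
    apply: h2; move/negbT: hik; rewrite -leqNgt => hik; lia.
  + rewrite big_split_ord /=; congr (_ + _); apply: eq_bigr => i _ /=.
      by rewrite ltn_ord.
    by rewrite ltnNge leq_addr /= addKn.
- move=> c a [k [a1 [b1 [h ->]]]]; exists k, (fun i => c * a1 i), b1; split.
  + move=> i hi; have [ha hb] := h i hi; split => //; exact: hA.
  + rewrite mulr_sumr; apply: eq_bigr => i _; by rewrite mulrA.
Qed.

Lemma ipow_ideal (I : R -> Prop) n : is_ideal I -> is_ideal (ipow I n).
Proof. case: n => [|n] [_ _ hI]; first by split. exact: imul_ideal. Qed.

Lemma imul_mul (A B : R -> Prop) a b : A a -> B b -> imul A B (a * b).
Proof. move=> ha hb; exists 1%N, (fun _ => a), (fun _ => b); split => //; by rewrite big_ord1. Qed.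

Lemma imul_mono (A B B' : R -> Prop) r : (forall z, B z -> B' z) -> imul A B r -> imul A B' r.
Proof.
move=> hB [k [a [b [h ->]]]]; exists k, a, b; split => // i hi.
by have [? ?] := h i hi; split => //; apply: hB.
Qed.

Lemma ipow_S (I : R -> Prop) n r : ipow I n.+1 r -> ipow I n r.
Proof.
elim: n r => [|n IH] r h //.
change (imul I (ipow I n) r); exact: (imul_mono IH h).
Qed.

Lemma ideal_sum (I : R -> Prop) k (F : nat -> R) : is_ideal I ->
  (forall j, (j < k)%N -> I (F j)) -> I (\sum_(j < k) F j).
Proof.
move=> [h0 hD hM] hF; apply: (big_ind I) => //.
move=> i _; exact: hF.
Qed.

Lemma ideal_opp (I : R -> Prop) a : is_ideal I -> I a -> I (- a).
Proof. move=> [_ _ hM] ha; rewrite -mulN1r; exact: hM. Qed.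

Lemma ideal_sub (I : R -> Prop) a b : is_ideal I -> I a -> I b -> I (a - b).
Proof. move=> hI ha hb; case: (hI) => _ hD _; apply: hD => //; exact: ideal_opp. Qed.

Lemma sum_recr_cond (F : nat -> R) (P : pred nat) k :
  \sum_(j < k.+1 | P j) F j = \sum_(j < k | P j) F j + (if P k then F k else 0).
Proof. by rewrite big_mkcond big_ord_recr /= -big_mkcond. Qed.

Lemma gen_comb (s : seq R) r : gen s r <-> comb (fun _ => True) s (size s) r.
Proof.
split.
- move=> [c ->]; exists (fun j => oapp c 0 (insub j)); split => //.
  apply: eq_bigr => i _; by rewrite valK mulrC.
- move=> [c [_ ->]]; exists (fun o => c o); apply: eq_bigr => i _; exact: mulrC.
Qed.

Lemma gen_nth (s : seq R) j : (j < size s)%N -> gen s s`_j.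
Proof.
move=> hj; exists (fun o : 'I_(size s) => (o == j :> nat)%:R).
rewrite (bigD1 (Ordinal hj)) //= eqxx mul1r big1 ?addr0 // => o ho.
have -> : (nat_of_ord o == j) = false.
  apply/negbTE; apply: contra ho => /eqP h; apply/eqP; exact: val_inj.
by rewrite mul0r.
Qed.

Lemma comb0 P s k : P 0 -> comb P s k 0.
Proof. move=> h; exists (fun _ => 0); split => //; by rewrite big1 // => j _; rewrite mulr0. Qed.

Lemma comb_imul (P : R -> Prop) (s : seq R) r : is_ideal P ->
  (imul (gen s) P r <-> comb P s (size s) r).
Proof.
move=> hP; case: (hP) => h0 hD hM; split.
- move=> [k [a [b [h ->]]]].
  apply: (big_ind (comb P s (size s))).
  + exact: comb0.
  + move=> u w [c1 [hc1 ->]] [c2 [hc2 ->]]; exists (fun j => c1 j + c2 j); split.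
      by move=> j hj; apply: hD; [apply: hc1 | apply: hc2].
    by rewrite -big_split /=; apply: eq_bigr => j _; rewrite mulrDr.
  + move=> i _; have [[c ->] hb] := h i (ltn_ord i).
    exists (fun j => oapp c 0 (insub j) * b i); split.
      by move=> j _; apply: hM.
    rewrite mulr_suml; apply: eq_bigr => j _; rewrite valK mulrA; congr (_ * _); exact: mulrC.
- move=> [c [hc ->]]; exists (size s), (fun j => s`_j), c; split => //.
  move=> j hj; split; [exact: gen_nth | exact: hc].
Qed.

Lemma comb_take P (x : seq R) i r : (i <= size x)%N ->
  (comb P (take i x) (size (take i x)) r <-> comb P x i r).
Proof.
move=> hi; rewrite size_takel //; split => -[c [hc ->]]; exists c; split => //;
  apply: eq_bigr => j _; by rewrite nth_take.
Qed.

Lemma comb_mono (P Q : R -> Prop) s k r : (forall z, P z -> Q z) -> comb P s k r -> comb Q s k r.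
Proof. move=> h [c [hc ->]]; exists c; split => // j hj; exact/h/hc. Qed.


Definition H1n (I : R -> Prop) (z : seq R) (m n : nat) : Prop :=
  forall v : nat -> R, (forall j, (j < m)%N -> ipow I n.-1 (v j)) ->
    \sum_(j < m) z`_j * v j = 0 ->
    exists u : nat -> nat -> R, (forall j k, ipow I (n - 2) (u j k)) /\
      (forall l, (l < m)%N -> v l = \sum_(j < m | (j < l)%N) z`_j * u j l
             - \sum_(k < m | (l < k)%N) z`_k * u l k).

Lemma ipow0 (I : R -> Prop) n : is_ideal I -> ipow I n 0.
Proof. by move=> hI; case: (ipow_ideal n hI). Qed.

Lemma H1_H1n (I : R -> Prop) z n : is_ideal I -> (H1_zero I z n <-> H1n I z (size z) n).
Proof.
move=> hI; split.
- move=> H v hv hs.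
  have [u [hu huv]] := H (fun o => v o) (fun j => hv j (ltn_ord j)) hs.
  exists (fun j k => match insub j, insub k with Some a, Some b => u a b | _, _ => 0 end).
  split.
    move=> j k; case: insub => [a|]; [case: insub => [b|] |]; try exact: hu; exact: ipow0.
  move=> l hl; have hl' : insub l = Some (Ordinal hl) := valK (Ordinal hl).
  rewrite (huv (Ordinal hl)) /=; congr (_ - _); apply: eq_bigr => j _; by rewrite valK hl'.
- move=> H v hv hs.
  pose v' := fun j : nat => oapp v 0 (insub j).
  have hv' : forall j, (j < size z)%N -> ipow I n.-1 (v' j).
    move=> j hj; rewrite /v'; case: insub => [a|] /=; [exact: hv | exact: ipow0].
  have hs' : \sum_(j < size z) z`_j * v' j = 0.
    rewrite -[RHS]hs; apply: eq_bigr => j _; by rewrite /v' valK.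
  have [u [hu huv]] := H v' hv' hs'.
  exists (fun a b => u a b); split => // l.
  by have := huv l (ltn_ord l); rewrite /v' valK /= => ->.
Qed.

Lemma H1n_ext (I : R -> Prop) z z' m n : (forall j, (j < m)%N -> z`_j = z'`_j) ->
  H1n I z m n -> H1n I z' m n.
Proof.
move=> hz H v hv hs.
have hs' : \sum_(j < m) z`_j * v j = 0.
  rewrite -[RHS]hs; apply: eq_bigr => j _; by rewrite hz.
have [u [hu huv]] := H v hv hs'.
exists u; split => // l hl; rewrite huv //; congr (_ - _); apply: eq_bigr => j _; by rewrite hz.
Qed.

Lemma H1_take (I : R -> Prop) (x : seq R) i n : is_ideal I -> (i <= size x)%N ->
  (H1_zero I (take i x) n <-> H1n I x i n).
Proof.
move=> hI hi; rewrite H1_H1n // size_takel //; split; apply: H1n_ext => j hj;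
  by rewrite nth_take.
Qed.

Definition colon_n (I : R -> Prop) (x : seq R) k n := forall r, ipow I n.-1 r ->
  comb (ipow I n.-1) x k (x`_k * r) -> comb (ipow I (n - 2)) x k r.

Lemma imul_take (I : R -> Prop) (x : seq R) k m y : is_ideal I -> (k <= size x)%N ->
  (imul (gen (take k x)) (ipow I m) y <-> comb (ipow I m) x k y).
Proof. move=> hI hk; rewrite comb_imul ?comb_take //; exact: ipow_ideal. Qed.

Lemma colon_conv (I : R -> Prop) (x : seq R) k n : is_ideal I -> (k < size x)%N ->
  (colon_zero I x k.+1 n <-> colon_n I x k n).
Proof.
move=> hI hk; have hk' := ltnW hk; rewrite /colon_zero /colon_n /=; split => H r hr hc.
- apply (imul_take (n-2) r hI hk').1; apply: H => //; exact: (imul_take n.-1 _ hI hk').2.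
- apply (imul_take (n-2) r hI hk').2; apply: H => //; exact: (imul_take n.-1 _ hI hk').1.
Qed.

End Aux.
Section Main.
Variable R : comUnitRingType.
Variable I : R -> Prop.
Variable x : seq R.
Hypothesis hI : is_ideal I.
Hypothesis hx : forall j, I x`_j.

Lemma fwd k n : (2 <= n)%N -> H1n I x k.+1 n -> colon_n I x k n.
Proof.
move=> hn H r hr [w [hw hxr]].
pose v := fun j : nat => if j == k then r else - w j.
have hv : forall j, (j < k.+1)%N -> ipow I n.-1 (v j).
  move=> j hj; rewrite /v; case: eqP => hjk //; apply: ideal_opp; [exact: ipow_ideal | apply: hw; lia].
have hs : \sum_(j < k.+1) x`_j * v j = 0.
  rewrite big_ord_recr /= /v eqxx.
  under eq_bigr => j _ do rewrite (ltn_eqF (ltn_ord j)) mulrN.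
  by rewrite sumrN -hxr addNr.
have [u [hu huv]] := H v hv hs.
exists (fun j => u j k); split; first by move=> j _; exact: hu.
have := huv k (ltnSn k); rewrite /v eqxx => ->.
rewrite (sum_recr_cond (fun j => x`_j * u j k) (fun j => (j < k)%N)) ltnn addr0.
rewrite [X in _ - X]big1; last first.
  move=> j hj; exfalso; have := ltn_ord j; move: hj; lia.
rewrite subr0; apply: eq_bigl => j; exact: ltn_ord.
Qed.


Lemma step k n : (2 <= n)%N -> H1n I x k n -> colon_n I x k n -> H1n I x k.+1 n.
Proof.
move=> hn IH hc v hv hs.
have hpI := ipow_ideal n.-1 hI.
have hn1 : n.-1 = (n - 2).+1 by lia.
have hsk : \sum_(j < k) x`_j * v j + x`_k * v k = 0 by rewrite -[RHS]hs big_ord_recr.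
have hxk : comb (ipow I n.-1) x k (x`_k * v k).
  exists (fun j => - v j); split.
    move=> j hj; apply: ideal_opp => //; apply: hv; exact: ltnW.
  have -> : x`_k * v k = - \sum_(j < k) x`_j * v j.
    by apply/eqP; rewrite -addr_eq0 addrC hsk.
  rewrite -sumrN; apply: eq_bigr => j _; by rewrite mulrN.
have [e [he hve]] := hc (v k) (hv k (ltnSn k)) hxk.
pose v' := fun j => v j + x`_k * e j.
have hv' : forall j, (j < k)%N -> ipow I n.-1 (v' j).
  move=> j hj; case: hpI => _ hD _; apply: hD; first by apply: hv; exact: ltnW.
  rewrite hn1; exact: imul_mul (hx k) (he j hj).
have hs' : \sum_(j < k) x`_j * v' j = 0.
  rewrite /v'; under eq_bigr => j _ do rewrite mulrDr mulrCA.
  by rewrite big_split /= -mulr_sumr -hve.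
have [u' [hu' huv']] := IH v' hv' hs'.
pose U := fun j l => if l == k then (if (j < k)%N then e j else 0) else u' j l.
exists U; split.
  move=> j l; rewrite /U; case: ifP => _; last exact: hu'.
  case: ifP => hj; [exact: he | exact: ipow0].
move=> l hl; have [->|hlk] : l = k \/ (l < k)%N by lia.
- rewrite hve (sum_recr_cond (fun j => x`_j * U j k) (fun j => (j < k)%N)) ltnn addr0.
  rewrite [X in _ - X]big1; last first.
    move=> j hj; exfalso; have := ltn_ord j; move: hj; lia.
  rewrite subr0; apply: eq_big => [j|j _] /=; first by rewrite ltn_ord.
  by rewrite /U eqxx ltn_ord.
- have := huv' l hlk; rewrite /v' => h.
  rewrite -(addrK (x`_k * e l) (v l)) h.
  rewrite (sum_recr_cond (fun j => x`_j * U j l) (fun j => (j < l)%N)).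
  have -> : (k < l)%N = false by apply/negbTE; rewrite -leqNgt; exact: ltnW.
  rewrite addr0 (sum_recr_cond (fun j => x`_j * U l j) (fun j => (l < j)%N)) hlk /U eqxx hlk.
  rewrite opprD addrA; congr (_ - _ - _).
    apply: eq_bigr => j _; by rewrite (ltn_eqF hlk).
  apply: eq_bigr => j _; by rewrite (ltn_eqF (ltn_ord j)).
Qed.

Lemma H1n0 n : H1n I x 0 n.
Proof.
move=> v _ _; exists (fun _ _ => 0); split => // j k; exact: ipow0.
Qed.

Lemma bwd s n : (2 <= n)%N -> (forall k, (k < s)%N -> colon_n I x k n) ->
  forall i, (i <= s)%N -> H1n I x i n.
Proof.
move=> hn hc; elim=> [|i IH] hi; first exact: H1n0.
apply: step => //; [apply: IH; exact: ltnW | exact: hc].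
Qed.

End Main.
Section Main2.
Variable R : comUnitRingType.
Variable I : R -> Prop.
Variable x : seq R.
Hypothesis hI : is_ideal I.
Hypothesis hx : forall j, I x`_j.

Definition lowc k d q := if d is d'.+1 then comb (ipow I d') x k q else q = 0.

Definition Gn := forall k, (k.+1 < size x)%N -> forall d a, ipow I d a ->
  (exists p q, [/\ ipow I d.+2 p, comb (ipow I d) x k q & x`_k * a = p + q]) ->
  exists p q, [/\ ipow I d.+1 p, lowc k d q & a = p + q].

Lemma low_conv k d q : (k <= size x)%N -> low_part I (take k x) d q -> lowc k d q.
Proof. move=> hk; case: d => [|d] //= h; exact: (imul_take _ _ hI hk).1. Qed.

Lemma G_conv : G_sequence I (take (size x).-1 x) -> Gn.
Proof.
move=> [hG _] k hk d a ha [p [q [hp hq e]]].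
have hk' : (k < size (take (size x).-1 x))%N by rewrite size_takel ?leq_pred //; lia.
have hkx : (k <= (size x).-1)%N by lia.
have [|p' [q' [hp' hq' ->]]] := hG k hk' d a ha.
  exists p, q; split => //.
    rewrite /= take_takel //; exact: (imul_take _ _ hI (leq_trans hkx (leq_pred _))).2.
  by rewrite nth_take //; lia.
exists p', q'; split => //; apply: low_conv; first lia.
by move: hq'; rewrite take_takel.
Qed.

Hypothesis hG : Gn.

Lemma deg_raise k : (k < size x)%N -> forall d (c : nat -> R), (forall j, (j < k)%N -> ipow I d (c j)) ->
  ipow I d.+2 (\sum_(j < k) x`_j * c j) ->
  exists c', (forall j, (j < k)%N -> ipow I d.+1 (c' j)) /\
    \sum_(j < k) x`_j * c j = \sum_(j < k) x`_j * c' j.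
Proof.
elim: k => [|k IH] hk d c hc hS.
  by exists c; split => // j; rewrite ltn0.
have hk' : (k < size x)%N by lia.
have hpI := ipow_ideal d hI.
have hck0 := hc k (ltnSn k).
have [p [q [hp hlq hck]]] : exists p q, [/\ ipow I d.+1 p, lowc k d q & c k = p + q].
  apply: hG => //; exists (\sum_(j < k.+1) x`_j * c j), (\sum_(j < k) x`_j * - c j).
  split => //.
    exists (fun j => - c j); split => // j hj; apply: ideal_opp => //; apply: hc; lia.
  have e2 : \sum_(j < k) x`_j * - c j = - \sum_(j < k) x`_j * c j.
    by rewrite -sumrN; apply: eq_bigr => j _; rewrite mulrN.
  rewrite e2 big_ord_recr /=; ring.
have [e [he hqe]] : exists e : nat -> R, (forall j, (j < k)%N -> ipow I d (x`_k * e j)) /\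
    q = \sum_(j < k) x`_j * e j.
  destruct d as [|d'].
    exists (fun _ => 0); split => //; rewrite hlq big1 // => j _; by rewrite mulr0.
  have [e [he ->]] := hlq; exists e; split => // j hj; exact: imul_mul (hx k) (he j hj).
pose b := fun j => c j + x`_k * e j.
have hb : forall j, (j < k)%N -> ipow I d (b j).
  move=> j hj; case: hpI => _ hD _; apply: hD; [apply: hc; lia | exact: he].
have hbS : \sum_(j < k) x`_j * b j = \sum_(j < k.+1) x`_j * c j - x`_k * p.
  rewrite /b; under eq_bigr => j _ do rewrite mulrDr mulrCA.
  rewrite big_split /= -mulr_sumr -hqe [in RHS]big_ord_recr /= hck; ring.
have hbI : ipow I d.+2 (\sum_(j < k) x`_j * b j).
  rewrite hbS; apply: ideal_sub => //; first exact: ipow_ideal.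
  exact: imul_mul (hx k) hp.
have [c' [hc' hce]] := IH hk' d b hb hbI.
exists (fun j => if j == k then p else c' j); split.
  move=> j hj; case: eqP => hjk //; apply: hc'; lia.
rewrite [RHS]big_ord_recr /= eqxx.
have e2 : \sum_(j < k) x`_j * (if (j : nat) == k then p else c' j) = \sum_(j < k) x`_j * c' j.
  by apply: eq_bigr => j _; rewrite (ltn_eqF (ltn_ord j)).
rewrite e2.
by rewrite -hce hbS subrK.
Qed.

Lemma raise k : (k < size x)%N -> forall m (c : nat -> R), ipow I m.+1 (\sum_(j < k) x`_j * c j) ->
  exists c', (forall j, (j < k)%N -> ipow I m (c' j)) /\
    \sum_(j < k) x`_j * c j = \sum_(j < k) x`_j * c' j.
Proof.
move=> hk; elim=> [|m IHm] c h; first by exists c.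
have [c' [hc' e]] := IHm c (ipow_S h).
have hS : ipow I m.+2 (\sum_(j < k) x`_j * c' j) by rewrite -e.
have [c'' [hc'' e']] := deg_raise hk hc' hS.
by exists c''; split => //; rewrite e e'.
Qed.

Lemma colon_from_R k n : (2 <= n)%N -> (k < size x)%N -> R_sequence x -> colon_n I x k n.
Proof.
move=> hn hk [hR _] r hr hc.
have hk' := ltnW hk.
have hg : gen (take k x) (x`_k * r).
  apply/gen_comb; apply/(comb_take _ _ hk'); exact: comb_mono _ hc.
have := hR k hk r hg; move/gen_comb/(comb_take _ _ hk') => [c [_ hrc]]; subst r.
have hn1 : n.-1 = (n - 2).+1 by lia.
rewrite hn1 in hr.
have [c' [hc' ->]] := raise hk hr.
by exists c'.
Qed.

End Main2.
Unset Implicit Arguments.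
Theorem lemma3p3 (R : comUnitRingType) (I J : R -> Prop) (x : seq R) :
  noetherian R -> local_ring R -> is_ideal I -> is_ideal J ->
  (forall r, J r -> I r) -> minimal_generating J x ->
  (forall n : nat, (2 <= n)%N ->
     ((forall i, (1 <= i <= size x)%N -> H1_zero I (take i x) n) <->
      (forall i, (1 <= i <= size x)%N -> colon_zero I x i n))) /\
  (R_sequence x -> G_sequence I (take (size x).-1 x) ->
     forall n i, (2 <= n)%N -> (1 <= i <= size x)%N -> H1_zero I (take i x) n).
Proof.
move=> _ _ hI hJ hJI [hJx _].
have hx : forall j, I x`_j.
  move=> j; case: (ltnP j (size x)) => hj.
    apply: hJI; apply/hJx; exact: gen_nth.
  rewrite nth_default //; by case: hI.
split.
- move=> n hn; split => H [|k] /andP [hi1 hi2] //.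
  + apply/(colon_conv n hI hi2); apply: (fwd hI hn).
    exact/(H1_take n hI hi2)/H.
  + apply/(H1_take n hI hi2); apply: (bwd hI hx hn _ hi2) => j hj.
    apply/(colon_conv n hI hj); apply: H; by rewrite /= hj.
- move=> hR hGs n [|k] hn /andP [hi1 hi2] //.
  apply/(H1_take n hI hi2); apply: (bwd hI hx hn _ hi2) => j hj.
  exact: (colon_from_R hI hx (G_conv hI hGs) hn hj hR).
Qed.
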